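(* Let $A$ be a set, $T=A^*$, $Y$ a semilattice and $\cdot$ a left partial action of $T$ on $Y$ satisfying axioms (A), (B), (C) which is a partially defined action and such that $M(T,Y)$ is an ultra $F$-restriction monoid. For $v\in T$ let $d_v$ be the greatest element of $\mathrm{dom}(\varphi_v)$. Then the poset $X$ (defined in the context) is a meet semilattice, and for $[e,v],[f,u]\in X$, $$[e,v]\wedge[f,u]=[\,v'\cdot(e\wedge d_{v'})\wedge u'\cdot(f\wedge d_{u'}),\,k\,],$$ where $k$ is the longest common prefix of $v$ and $u$, and $v=kv'$, $u=ku'$.
   Context: $A^*$ is the free monoid on $A$. A left partial action of $T$ on $Y$: $1\cdot y=y$ always defined; if $t\cdot y$, $s\cdot(t\cdot y)$ are defined then $(st)\cdot y$ is defined and equals it. With $\varphi_t\colon y\mapsto t\cdot y$: (A) $\mathrm{dom}\varphi_t$, $\mathrm{ran}\varphi_t$ are order ideals of $Y$; (B) $\varphi_t$ is an order-isomorphism between them; (C) $\mathrm{dom}\varphi_t\neq\varnothing$. Partially defined action: $(st)\cdot x$ defined iff $t\cdot x$ and $s\cdot(t\cdot x)$ defined. Reverse: $y\circ t=\varphi_t^{-1}(y)$ for $y\in\mathrm{ran}\varphi_t$. $M(T,Y)=\{(y,t)\colon y\circ t\text{ defined}\}$ with $(x,s)(y,t)=(s\cdot((x\circ s)\wedge y),st)$, $(y,t)^*=(y\circ t,1)$, $(y,t)^+=(y,1)$; it is a proper restriction semigroup. A restriction monoid is ultra $F$-restriction if it is proper, every class of the least congruence $\sigma$ identifying projections has a maximum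 in the natural order ($a\le b\iff a=eb$ for a projection $e$), and its underlying left partial action (of $S/\sigma$ on $P(S)$: $t\cdot e$ defined iff some $a\in t$ has $a^*\ge e$, value $(ae)^+$) is a partially defined action. Construction of $X$: for $(x,s),(y,t)\in Y\times T$ put $(x,s)\to(y,t)$ if there is $p\in T$ with $s=tp$, $p\cdot x$ defined and $p\cdot x=y$. Let $\sim$ be the equivalence generated by $\to$. On $(Y\times T)/\!\sim$ put $C\ge D$ if there are $(x,s)\in C$, $(y,s)\in D$ with $x\ge y$ (a preorder). Identify classes that are mutually $\le$ to get the poset $X$, whose elements are written $[x,s]$, with the induced order. *)

(* Defs.v *)
From HB Require Import structures.
From mathcomp Require Import all_boot all_order.
From Stdlib Require Import ClassicalEpsilon Relations.
Set Implicit Arguments. Unset Strict Implicit. Unset Printing Implicit Defensive.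
Import Order.Theory.
Local Open Scope order_scope.

Section PartialAction.
Variables (A : Type) (disp : Order.disp_t) (Y : meetSemilatticeType disp).
(* T = A^* is [seq A] with concatenation; [act t y = Some z] means t.y is defined and equals z. *)
Variable act : seq A -> Y -> option Y.

Definition defined (t : seq A) (y : Y) : Prop := act t y <> None.

Definition left_partial_action : Prop :=
  (forall y, act [::] y = Some y) /\
  (forall s t y z w, act t y = Some z -> act s z = Some w -> act (s ++ t) y = Some w).

Definition axiomA : Prop :=
  (forall t y z, defined t y -> z <= y -> defined t z) /\
  (forall t y y' z, act t y = Some y' -> z <= y' -> exists w, act t w = Some z).

Definition axiomB : Prop :=
  forall t y z y' z', act t y = Some y' -> act t z = Some z' -> (y <= z <-> y' <= z').

Definition axiomC : Prop := forall t, exists y, defined t y.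

Definition partially_defined_action : Prop :=
  forall s t x, defined (s ++ t) x <-> exists z, act t x = Some z /\ defined s z.

(* reverse action y o t = phi_t^{-1}(y) (junk value y outside ran phi_t) *)
Definition ract (y : Y) (t : seq A) : Y :=
  epsilon (inhabits y) (fun x => act t x = Some y).

(* the monoid M(T,Y) : carrier Y * seq A restricted to inM *)
Definition inM (a : Y * seq A) : Prop := exists x, act a.2 x = Some a.1.

Definition mulM (a b : Y * seq A) : Y * seq A :=
  (odflt b.1 (act a.2 (ract a.1 a.2 `&` b.1)), a.2 ++ b.2).

Definition starM (a : Y * seq A) : Y * seq A := (ract a.1 a.2, [::]).
Definition plusM (a : Y * seq A) : Y * seq A := (a.1, [::]).

Definition projM (e : Y * seq A) : Prop := exists a, inM a /\ e = plusM a.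

Definition natleM (a b : Y * seq A) : Prop := exists e, projM e /\ a = mulM e b.

Definition congruenceM (R : Y * seq A -> Y * seq A -> Prop) : Prop :=
  (forall a, inM a -> R a a) /\
  (forall a b, R a b -> R b a) /\
  (forall a b c, R a b -> R b c -> R a c) /\
  (forall a b c d, inM a -> inM b -> inM c -> inM d ->
     R a b -> R c d -> R (mulM a c) (mulM b d)).

Definition sigmaM (a b : Y * seq A) : Prop :=
  inM a /\ inM b /\
  forall R, congruenceM R -> (forall e f, projM e -> projM f -> R e f) -> R a b.

Definition monoidM : Prop :=
  exists one, inM one /\ forall a, inM a -> mulM one a = a /\ mulM a one = a.

Definition properM : Prop :=
  (forall a b, sigmaM a b -> plusM a = plusM b -> a = b) /\
  (forall a b, sigmaM a b -> starM a = starM b -> a = b).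

Definition sigma_classes_have_max : Prop :=
  forall a, inM a -> exists m, sigmaM m a /\ forall b, sigmaM b a -> natleM b m.

(* underlying left partial action of M/sigma on P(M):
   [t . e] defined iff some b in t has e <= b^*, value (b e)^+ *)
Definition uact_defined (a e : Y * seq A) : Prop :=
  exists b, sigmaM b a /\ natleM e (starM b).

Definition underlying_partially_defined : Prop :=
  forall a b e, inM a -> inM b -> projM e ->
    (uact_defined (mulM a b) e <->
     exists b', sigmaM b' b /\ natleM e (starM b') /\ uact_defined a (plusM (mulM b' e))).

Definition ultra_F_restriction_monoid : Prop :=
  monoidM /\ properM /\ sigma_classes_have_max /\ underlying_partially_defined.

Definition stepX (p q : Y * seq A) : Prop :=
  exists r, p.2 = q.2 ++ r /\ act r p.1 = Some q.1.

Definition simX : Y * seq A -> Y * seq A -> Prop := clos_refl_sym_trans _ stepX.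

(* C >= D iff exists (x,s) in C, (y,s) in D with y <= x; here leX p q means [p] <= [q] *)
Definition leX (p q : Y * seq A) : Prop :=
  exists x s y, simX (x, s) q /\ simX (y, s) p /\ y <= x.

Definition is_meetX (m p q : Y * seq A) : Prop :=
  leX m p /\ leX m q /\ forall r, leX r p -> leX r q -> leX r m.

Definition greatest_of_dom (v : seq A) (d : Y) : Prop :=
  defined v d /\ forall y, defined v y -> y <= d.

End PartialAction.

(* Main.v *)
Require Import Defs.
From HB Require Import structures.
From mathcomp Require Import all_boot all_order.
From Stdlib Require Import ClassicalEpsilon Relations.
Set Implicit Arguments. Unset Strict Implicit.
Import Order.Theory.
Local Open Scope order_scope.

Lemma cat_split (A : Type) (l1 r1 l2 r2 : seq A) :
  l1 ++ r1 = l2 ++ r2 ->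
  (exists q, l1 = l2 ++ q /\ r2 = q ++ r1) \/ (exists q, l2 = l1 ++ q /\ r1 = q ++ r2).
Proof.
elim: l1 l2 => [|a l1 IH] [|b l2] /=.
- by move=> ->; left; exists [::].
- by move=> ->; right; exists (b :: l2).
- by move=> <-; left; exists (a :: l1).
- case=> -> /IH [[q [-> ->]]|[q [-> ->]]]; [left|right]; by exists q.
Qed.

Lemma cat_cancel (A : Type) (k a b : seq A) : k ++ a = k ++ b -> a = b.
Proof. elim: k => //= x k IH H. apply: IH. by case: H. Qed.

Section H.
Variables (A : Type) (disp : Order.disp_t) (Y : meetSemilatticeType disp)
  (act : seq A -> Y -> option Y).

Lemma act_cat : left_partial_action act -> partially_defined_action act ->
  forall s t x w, act (s ++ t) x = Some w -> exists z, act t x = Some z /\ act s z = Some w.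
Proof.
move=> lpa pda s t x w H.
have: defined act (s++t) x by rewrite /defined H.
move/pda => [z [Hz]]; rewrite /defined.
case Hs: (act s z) => [w'|] // _.
exists z; split=> //.
have := (lpa.2 _ _ _ _ _ Hz Hs). by rewrite H => -[->].
Qed.

Lemma act_inj : axiomB act -> forall t y z c, act t y = Some c -> act t z = Some c -> y = z.
Proof.
move=> B t y z c Hy Hz; apply/le_anti/andP; split.
  by apply/(B _ _ _ _ _ Hy Hz).
by apply/(B _ _ _ _ _ Hz Hy).
Qed.

Lemma step_refl : left_partial_action act -> forall a, stepX act a a.
Proof. move=> lpa [x s]; exists [::]; by rewrite cats0 lpa.1. Qed.

Lemma step_trans : left_partial_action act -> forall a b c,
  stepX act a b -> stepX act b c -> stepX act a c.
Proof.
move=> lpa [x s] [y t] [z w] [r [/= Hs Hr]] [r' [/= Ht Hr']].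
exists (r' ++ r); split => /=; first by rewrite Hs Ht catA.
exact: (lpa.2 _ _ _ _ _ Hr Hr').
Qed.

Lemma step_comp : left_partial_action act -> partially_defined_action act ->
  forall a b c, stepX act a b -> stepX act a c -> stepX act b c \/ stepX act c b.
Proof.
move=> lpa pda [x s] [y t] [z w] [r [/= Hs Hr]] [r' [/= Ht Hr']].
rewrite Hs in Ht.
case: (cat_split Ht) => [[q [E1 E2]]|[q [E1 E2]]].
- left; exists q; split=> //=.
  rewrite E2 in Hr'. have [z' [H1 H2]] := act_cat lpa pda Hr'.
  by rewrite Hr in H1; case: H1 => ->.
- right; exists q; split=> //=.
  rewrite E2 in Hr. have [z' [H1 H2]] := act_cat lpa pda Hr.
  by rewrite Hr' in H1; case: H1 => ->.
Qed.

Lemma sim_join : left_partial_action act -> partially_defined_action act ->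
  forall a b, simX act a b -> exists c, stepX act a c /\ stepX act b c.
Proof.
move=> lpa pda a b; elim.
- by move=> p q H; exists q; split=> //; apply: step_refl.
- by move=> p; exists p; split; apply: step_refl.
- by move=> p q _ [c [H1 H2]]; exists c.
- move=> p q r _ [c1 [H1 H2]] _ [c2 [H3 H4]].
  case: (step_comp lpa pda H2 H3) => H.
  + exists c2; split=> //; exact: step_trans H1 H.
  + exists c1; split=> //; exact: step_trans H4 H.
Qed.


Lemma leX_refl p : leX act p p.
Proof. case: p => x s; exists x, s, x; split; [exact: rst_refl|split; [exact: rst_refl|exact: lexx]]. Qed.

Lemma leX_trans : left_partial_action act -> partially_defined_action act ->
  axiomA act -> axiomB act -> forall p q r, leX act p q -> leX act q r -> leX act p r.
Proof.
move=> lpa pda [A1 A2] B p q r [x [s [y [Hxq [Hyp Hyx]]]]] [x' [s' [y' [Hxr [Hyq Hyx']]]]].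
have [[z w] [[p1 [/= E1 H1]] [p2 [/= E2 H2]]]] :=
  sim_join lpa pda (rst_trans _ _ _ _ _ Hxq (rst_sym _ _ _ _ Hyq)).
have: defined act p1 y by apply: (A1 _ x _ _ Hyx); rewrite /defined H1.
rewrite /defined; case Hy1: (act p1 y) => [y1|] // _.
have le1 : y1 <= z by apply/(B _ _ _ _ _ Hy1 H1).
have [u Hu] := A2 _ _ _ _ H2 le1.
have leu : u <= y' by apply/(B _ _ _ _ _ Hu H2).
exists x', s', u; split=> //; split; last exact: le_trans leu Hyx'.
apply: (@rst_trans _ _ _ (y1, w)); first by apply: rst_step; exists p2.
apply: (@rst_trans _ _ _ (y, s)); last by [].
by apply: rst_sym; apply: rst_step; exists p1.
Qed.

Lemma down : left_partial_action act -> partially_defined_action act ->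
  axiomA act -> axiomB act -> forall r e v, leX act r (e, v) ->
  exists w1 q1 e1 g1, v = w1 ++ q1 /\ e1 <= e /\ act q1 e1 = Some g1 /\ simX act r (g1, w1).
Proof.
move=> lpa pda [A1 A2] B r e v [x [s [y [Hx [Hy Hyx]]]]].
have [[z w1] [[p1 [/= E1 H1]] [q1 [/= E2 H2]]]] := sim_join lpa pda Hx.
have: defined act p1 y by apply: (A1 _ x _ _ Hyx); rewrite /defined H1.
rewrite /defined; case Hy1: (act p1 y) => [g|] // _.
have le1 : g <= z by apply/(B _ _ _ _ _ Hy1 H1).
have [e1 He1] := A2 _ _ _ _ H2 le1.
have lee : e1 <= e by apply/(B _ _ _ _ _ He1 H2).
exists w1, q1, e1, g; split=> //; split=> //; split=> //.
apply: (@rst_trans _ _ _ _ _ (rst_sym _ _ _ _ Hy)).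
by apply: rst_step; exists p1.
Qed.

Lemma up_helper : axiomB act -> axiomA act -> forall v' w a g e k,
  act v' w = Some a -> g <= a -> w <= e -> leX act (g, k) (e, k ++ v').
Proof.
move=> B [A1 A2] v' w a g e k Hw ga we.
have [y Hy] := A2 _ _ _ _ Hw ga.
have yw : y <= w by apply/(B _ _ _ _ _ Hy Hw).
exists e, (k ++ v'), y; split; first exact: rst_refl.
split; last exact: le_trans yw we.
by apply: rst_step; exists v'.
Qed.

End H.

Lemma prefix_lemma (A : Type) (k v' u' w x1 x2 : seq A) :
  ~ (exists (a : A) v'' u'', v' = a :: v'' /\ u' = a :: u'') ->
  k ++ v' = w ++ x1 -> k ++ u' = w ++ x2 -> exists n, k = w ++ n.
Proof.
move=> Hn E1 E2.
case: (cat_split E1) => [[q [-> _]]|[q [Ew Ev]]]; first by exists q.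
rewrite Ew -catA in E2. move/cat_cancel: E2 => Eu.
case: q Ew Ev Eu => [|a q] Ew Ev Eu; first by exists [::]; rewrite Ew !cats0.
by case: Hn; exists a, (q ++ x1), (q ++ x2).
Qed.

Section P1.
Variables (A : Type) (disp : Order.disp_t) (Y : meetSemilatticeType disp)
  (act : seq A -> Y -> option Y).

Lemma ract_nil : left_partial_action act -> forall x, ract act x [::] = x.
Proof.
move=> lpa x; rewrite /ract.
have := epsilon_spec (inhabits x) (fun w => act [::] w = Some x) (ex_intro _ x (lpa.1 x)).
by rewrite lpa.1 => -[].
Qed.

Lemma mul_proj : left_partial_action act -> forall x y t,
  mulM act (x, [::]) (y, t) = (x `&` y, t).
Proof. by move=> lpa x y t; rewrite /mulM /= ract_nil // lpa.1. Qed.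

Lemma sigma_same : left_partial_action act -> forall x y t,
  inM act (x, t) -> inM act (y, t) -> sigmaM act (x, t) (y, t).
Proof.
move=> lpa x y t Hx Hy; split; [done|split; [done|]].
move=> R [Rr [Rs [Rt Rc]]] Rp.
have inP : forall z, inM act (z, [::]) by move=> z; exists z; apply: lpa.1.
have prP : forall z, projM act (z, [::]) by move=> z; exists (z, [::]); split.
have H1 := Rc _ _ _ _ (inP x) (inP y) Hx Hx (Rp _ _ (prP x) (prP y)) (Rr _ Hx).
have H2 := Rc _ _ _ _ (inP y) (inP x) Hy Hy (Rp _ _ (prP y) (prP x)) (Rr _ Hy).
rewrite !mul_proj // meetxx in H1.
rewrite !mul_proj // meetxx meetC in H2.
exact: Rt _ _ _ H1 (Rs _ _ H2).
Qed.

Lemma sigma_snd : forall a b, sigmaM act a b -> a.2 = b.2.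
Proof.
move=> a b [_ [_ H]]; apply: (H (fun p q => p.2 = q.2)).
  split; first by [].
  split; first by [].
  split; first by move=> ? ? ? -> ->.
  by move=> ? ? ? ? _ _ _ _ /= -> ->.
by move=> ? ? [? [_ ->]] [? [_ ->]].
Qed.

End P1.

Theorem lemma5p4 (A : Type) (disp : Order.disp_t) (Y : meetSemilatticeType disp)
  (act : seq A -> Y -> option Y) :
  left_partial_action act -> axiomA act -> axiomB act -> axiomC act ->
  partially_defined_action act -> ultra_F_restriction_monoid act ->
  (forall v, exists d, greatest_of_dom act v d) /\
  ((forall p, leX act p p) /\ (forall p q r, leX act p q -> leX act q r -> leX act p r)) /\
  (forall d : seq A -> Y, (forall v, greatest_of_dom act v (d v)) ->
   forall (e f : Y) (v u k v' u' : seq A),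
     v = k ++ v' -> u = k ++ u' ->
     ~ (exists (a : A) v'' u'', v' = a :: v'' /\ u' = a :: u'') ->
     exists a b, act v' (e `&` d v') = Some a /\ act u' (f `&` d u') = Some b /\
       is_meetX act (a `&` b, k) (e, v) (f, u)).
Proof.
move=> lpa AA B C pda UF; split; [|split].
- move=> v; have [y] := C v; rewrite /defined; case Hy: (act v y) => [y'|] // _.
  have Ma : inM act (y', v) by exists y.
  have [[m1 m2] [Hs Hmax]] := UF.2.2.1 _ Ma.
  have E := sigma_snd Hs; simpl in E; subst m2.
  have [x0 Hx0] : inM act (m1, v) := Hs.1.
  exists x0; split; first by rewrite /defined Hx0.
  move=> z; rewrite /defined; case Hz: (act v z) => [z'|] // _.
  have Mz : inM act (z', v) by exists z.
  have [e [[[c1 c2] [_ ->]] Eq]] := Hmax _ (sigma_same lpa Mz Ma).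
  move: Eq; rewrite /plusM /mulM /= lpa.1 /= => -[Ez].
  have : z' <= m1 by rewrite Ez leIr.
  by move/(B _ _ _ _ _ Hz Hx0).
- split; [exact: leX_refl | exact: leX_trans lpa pda AA B].
- move=> d Hd e f v u k v' u' Ev Eu Hn.
  have da : defined act v' (e `&` d v') := AA.1 _ _ _ (Hd v').1 (leIr _ _).
  have db : defined act u' (f `&` d u') := AA.1 _ _ _ (Hd u').1 (leIr _ _).
  move: da db; rewrite /defined.
  case Ha: (act v' (e `&` d v')) => [a|] // _.
  case Hb: (act u' (f `&` d u')) => [b|] // _.
  exists a, b; split=> //; split=> //; split; [|split].
  + rewrite Ev; apply: (up_helper B AA _ Ha); [exact: leIl | exact: leIl].
  + rewrite Eu; apply: (up_helper B AA _ Hb); [exact: leIr | exact: leIl].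
  + move=> r Hr1 Hr2.
    have [w1 [q1 [e1 [g1 [Ev1 [le1 [He1 Hs1]]]]]]] := down lpa pda AA B Hr1.
    have [w2 [q2 [f1 [g2 [Eu2 [le2 [Hf2 Hs2]]]]]]] := down lpa pda AA B Hr2.
    have [[h w3] [[m1 [/= Ew1 Hm1]] [m2 [/= Ew2 Hm2]]]] :=
      sim_join lpa pda (rst_trans _ _ _ _ _ (rst_sym _ _ _ _ Hs1) Hs2).
    have E1 : k ++ v' = w3 ++ (m1 ++ q1) by rewrite -Ev Ev1 Ew1 catA.
    have E2 : k ++ u' = w3 ++ (m2 ++ q2) by rewrite -Eu Eu2 Ew2 catA.
    have [n En] := prefix_lemma Hn E1 E2.
    rewrite En -catA in E1; rewrite En -catA in E2.
    move/cat_cancel in E1; move/cat_cancel in E2.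
    have H1 : act (n ++ v') e1 = Some h by rewrite E1; exact: lpa.2 _ _ _ _ _ He1 Hm1.
    have H2 : act (n ++ u') f1 = Some h by rewrite E2; exact: lpa.2 _ _ _ _ _ Hf2 Hm2.
    have [c1 [Hc1 Hn1]] := act_cat lpa pda H1.
    have [c2 [Hc2 Hn2]] := act_cat lpa pda H2.
    have Ec := act_inj B Hn1 Hn2.
    have le_e1 : e1 <= e `&` d v'.
      by rewrite lexI le1 (Hd v').2 // /defined Hc1.
    have le_f1 : f1 <= f `&` d u'.
      by rewrite lexI le2 (Hd u').2 // /defined Hc2.
    have ca : c1 <= a by apply/(B _ _ _ _ _ Hc1 Ha).
    have cb : c2 <= b by apply/(B _ _ _ _ _ Hc2 Hb).
    exists (a `&` b), k, c1; split; first exact: rst_refl.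
    split; last by rewrite lexI ca Ec cb.
    apply: (@rst_trans _ _ _ (h, w3)); first by apply: rst_step; exists n; split.
    apply: rst_sym; apply: (@rst_trans _ _ _ (g1, w1)) => //.
    by apply: rst_step; exists m1.
Qed.
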